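(* Let $\mathcal{H}=(X,\mathcal{E})$ be a hyperstar, and let $c^*\in X$ be a vertex contained in every edge of $\mathcal{H}$. Let $\mathcal{H}^-=(X\setminus\{c^*\},\{E\setminus\{c^*\}:E\in\mathcal{E}\})$. Then $\mathrm{dec}(\mathcal{H})=\tau(\mathcal{H}^-)=\tau_2(\mathcal{H})-1$ and $\overline{\chi}(\mathcal{H})=\alpha(\mathcal{H}^-)+1$.
   Context: A hypergraph $\mathcal{H}=(X,\mathcal{E})$ has a finite vertex set $X$, $|X|=n$, and edges that are subsets of $X$ with at least 2 vertices; it is a hyperstar if some vertex lies in every edge. A C-coloring is a map $\varphi:X\to\mathbb{N}$ such that every edge contains two distinct vertices of the same color; $\overline{\chi}(\mathcal{H})$ is the maximum number of colors in a C-coloring and $\mathrm{dec}(\mathcal{H})=n-\overline{\chi}(\mathcal{H})$. For a set system (possibly with edges of size 1), $\tau$ is the minimum size of a vertex set meeting every edge and $\alpha$ is the maximum size of a vertex set containing no edge entirely. $\tau_2(\mathcal{H})$ is the minimum size of a set $T\subseteq X$ with $|E\cap T|\ge 2$ for every edge $E$. *)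

(* Defs.v *)
From mathcomp Require Import all_boot.
Set Implicit Arguments. Unset Strict Implicit. Unset Printing Implicit Defensive.

(* A hypergraph H = (X, E): vertex set X = all of the finite type T,
   edge family E : {set {set T}}; each edge must have >= 2 vertices. *)
Definition is_hypergraph (T : finType) (E : {set {set T}}) : Prop :=
  forall e, e \in E -> 1 < #|e|.

Definition is_hyperstar (T : finType) (E : {set {set T}}) : Prop :=
  exists c : T, forall e, e \in E -> c \in e.

(* C-coloring: every edge contains two distinct vertices of the same color.
   Colors are taken in 'I_#|T| (no loss: a coloring uses at most |X| colors,
   and only the number of colors matters). *)
Definition C_coloring (T : finType) (E : {set {set T}}) (f : {ffun T -> 'I_#|T|}) : bool :=
  [forall e in E, [exists x in e, [exists y in e, (x != y) && (f x == f y)]]].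

Definition ncolors (T : finType) (f : {ffun T -> 'I_#|T|}) : nat :=
  #|f @: [set: T]|.

Definition chibar (T : finType) (E : {set {set T}}) : nat :=
  \max_(f : {ffun T -> 'I_#|T|} | C_coloring E f) ncolors f.

Definition dec (T : finType) (E : {set {set T}}) : nat := #|T| - chibar E.

(* Transversal number of the set system (V, F) (edges may have size 1):
   minimum size of S \subset V meeting every edge.  (V itself is always
   feasible when the edges are nonempty subsets of V, so the default #|V|
   of the min is never the binding value then.) *)
Definition tau (T : finType) (V : {set T}) (F : {set {set T}}) : nat :=
  \big[minn/#|V|]_(S : {set T} | (S \subset V) && [forall e in F, S :&: e != set0]) #|S|.

Definition alpha (T : finType) (V : {set T}) (F : {set {set T}}) : nat :=
  \max_(S : {set T} | (S \subset V) && [forall e in F, ~~ (e \subset S)]) #|S|.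

Definition tau2 (T : finType) (E : {set {set T}}) : nat :=
  \big[minn/#|T|]_(S : {set T} | [forall e in E, 1 < #|e :&: S|]) #|S|.

Definition minus_vertices (T : finType) (c : T) : {set T} := [set~ c].
Definition minus_edges (T : finType) (E : {set {set T}}) (c : T) : {set {set T}} :=
  [set e :\ c | e in E].

(* Main.v *)
Require Import Defs.
From mathcomp Require Import all_boot.
From mathcomp Require Import zify.
Set Implicit Arguments. Unset Strict Implicit. Unset Printing Implicit Defensive.

Lemma bigmin_le (I : finType) (P : pred I) (F : I -> nat) d i :
  P i -> \big[minn/d]_(j | P j) F j <= F i.
Proof.
move=> Pi; have : i \in index_enum I by rewrite mem_index_enum.
elim: (index_enum I) => [//|a s IH]; rewrite inE big_cons => /orP[/eqP<-|his].
  by rewrite Pi geq_minl.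
case: ifP => _; last exact: IH.
by apply: leq_trans (geq_minr _ _) (IH his).
Qed.

Lemma bigmin_att (I : finType) (P : pred I) (F : I -> nat) d i1 :
  P i1 -> F i1 = d -> exists2 i, P i & \big[minn/d]_(j | P j) F j = F i.
Proof.
move=> P1 E1.
apply: (big_ind (fun m => exists2 i, P i & m = F i)).
- by exists i1.
- move=> x y [i Pi ->] [j Pj ->]; case: (leqP (F i) (F j)) => h.
  + by exists i => //; apply/minn_idPl.
  + by exists j => //; apply/minn_idPr; exact: ltnW.
- by move=> i Pi; exists i.
Qed.

Lemma bigmax_att (I : finType) (P : pred I) (F : I -> nat) i1 :
  P i1 -> exists2 i, P i & \max_(j | P j) F j = F i.
Proof.
move=> P1.
have hm : forall x y, maxn x y = x \/ maxn x y = y.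
  by move=> x y; lia.
have : (\max_(j | P j) F j = 0) \/ exists2 i, P i & \max_(j | P j) F j = F i.
  apply: (big_ind (fun m => m = 0 \/ exists2 i, P i & m = F i)).
  - by left.
  - by move=> x y Kx Ky; case: (hm x y) => ->.
  - by move=> i Pi; right; exists i.
case=> // h0; exists i1 => //.
have := leq_bigmax_cond (F := F) i1 P1; rewrite h0; lia.
Qed.

Theorem proposition2 (T : finType) (E : {set {set T}}) (c : T) :
  is_hypergraph E ->
  (forall e, e \in E -> c \in e) ->
  dec E = tau (minus_vertices c) (minus_edges E c) /\
  tau (minus_vertices c) (minus_edges E c) = tau2 E - 1 /\
  chibar E = alpha (minus_vertices c) (minus_edges E c) + 1.
Proof.
move=> Hh Hc.
set V := minus_vertices c. set F := minus_edges E c.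
have inV : forall y, (y \in V) = (y != c) by move=> y; rewrite /V /minus_vertices in_setC1.
have cV : c \notin V by rewrite inV eqxx.
have cardV : #|V| = #|T|.-1 by rewrite /V /minus_vertices cardsC1.
have inF : forall e, e \in E -> e :\ c \in F by move=> e he; apply: imset_f.
have Fne : forall e, e \in E -> exists2 y, y \in e & y != c.
  move=> e he; have := cardsD1 c e; rewrite Hc // => h.
  have : 0 < #|e :\ c| by have := Hh e he; lia.
  rewrite card_gt0 => /set0Pn [y]; rewrite in_setD1 => /andP[yc ye]; by exists y.
have hA : (fun S : {set T} => (S \subset V) && [forall e in F, ~~ (e \subset S)]) set0.
  rewrite /= sub0set /=.
  apply/forallP => e'; apply/implyP => /imsetP[e he ->].
  have [y ye yc] := Fne e he; apply/negP => /subsetP /(_ y); rewrite in_setD1 yc ye inE.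
  by move=> /(_ isT).
have [S0 /andP[S0V S0i] AS0'] := (@bigmax_att _ (fun S : {set T} => (S \subset V) && [forall e in F, ~~ (e \subset S)]) (fun S => #|S|) set0 hA).
have AS0 : alpha V F = #|S0| := AS0'.
clear hA AS0'.

have S0i' : forall e, e \in E -> exists2 x, x \in e & (x != c) && (x \notin S0).
  move=> e he; have := forallP S0i (e :\ c); rewrite (inF e he) /= => /subsetPn [x hx hxS].
  by move: hx; rewrite in_setD1 => /andP[xc xe]; exists x => //; rewrite xc hxS.
have cS0 : c \notin S0 by exact: (contra (subsetP S0V c) cV).
pose f0 : {ffun T -> 'I_#|T|} := [ffun x => if x \in S0 then enum_rank x else enum_rank c].
have f0col : C_coloring E f0.
  apply/forallP => e; apply/implyP => he; have [x xe /andP[xc xS]] := S0i' e he.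
  apply/existsP; exists x; rewrite xe /=; apply/existsP; exists c.
  by rewrite Hc //= xc /= !ffunE (negbTE xS) (negbTE cS0) eqxx.
have f0n : ncolors f0 = #|S0| + 1.
  rewrite /ncolors.
  have -> : f0 @: [set: T] = enum_rank @: (c |: S0).
    apply/setP => i; apply/imsetP/imsetP => [[x _ ->]|[x hx ->]].
    - rewrite ffunE; case: ifP => xS.
      + by exists x => //; rewrite !inE xS orbT.
      + by exists c => //; rewrite !inE eqxx.
    - exists x => //; rewrite ffunE; move: hx; rewrite !inE => /orP[/eqP->|->] //.
      by rewrite (negbTE cS0).
  rewrite card_imset; last exact: enum_rank_inj.
  rewrite cardsU1 cS0 /=; lia.
have XgeA : alpha V F + 1 <= chibar E.
  rewrite AS0 -f0n /chibar; exact: (leq_bigmax_cond (P := C_coloring E) (F := @ncolors T) f0 f0col).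
have [f fcol Xf] : exists2 f, C_coloring E f & chibar E = ncolors f.
  rewrite /chibar; exact: (bigmax_att (P := C_coloring E) (@ncolors T) f0col).
pose r x := odflt x [pick y | f y == f x].
have rf : forall x, f (r x) = f x.
  by move=> x; rewrite /r; case: pickP => [y /eqP //|//].
have req : forall x y, f x = f y -> r x = r y.
  move=> x y h; rewrite /r h; case: pickP => // H.
  by have := H y; rewrite /= eqxx.
pose S := [set x | (f x != f c) && (r x == x)].
have SV : S \subset V.
  apply/subsetP => x; rewrite inE inV => /andP[h _].
  by apply: contraNneq h => ->.
have Si : [forall e in F, ~~ (e \subset S)].
  apply/forallP => e'; apply/implyP => /imsetP[e he ->]; apply/negP => sub.
  have := forallP fcol e; rewrite he /= =>
    /existsP[x /andP[xe /existsP[y /andP[ye /andP[xy fxy]]]]].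
  have memS : forall z, z \in e -> z != c -> z \in S.
    by move=> z ze zc; apply: (subsetP sub); rewrite in_setD1 zc ze.
  case: (eqVneq x c) => [xc|xc].
  - have : y \in S by apply: memS => //; rewrite -xc eq_sym.
    by rewrite inE -xc eq_sym fxy.
  - case: (eqVneq y c) => [yc|yc].
    + have : x \in S by apply: memS.
      by rewrite inE -yc fxy.
    + have := memS x xe xc; have := memS y ye yc; rewrite !inE => /andP[_ /eqP ry] /andP[_ /eqP rx].
      by move: xy; rewrite -rx -ry (req _ _ (eqP fxy)) eqxx.
have cardS : #|S| = ncolors f - 1.
  have inj : {in S &, injective f}.
    move=> x y; rewrite !inE => /andP[_ /eqP rx] /andP[_ /eqP ry] h.
    by rewrite -rx -ry (req _ _ h).
  rewrite -(card_in_imset inj).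
  have -> : f @: S = (f @: [set: T]) :\ f c.
    apply/setP => i; rewrite in_setD1; apply/imsetP/andP => [[x xS ->]|[ic /imsetP[z _ iz]]].
    - move: xS; rewrite inE => /andP[h _]; split => //; by rewrite imset_f ?in_setT.
    - exists (r z); last by rewrite rf.
      rewrite inE rf -iz ic /=; apply/eqP; apply: req; exact: rf.
  have := cardsD1 (f c) (f @: [set: T]); rewrite imset_f ?in_setT // /ncolors /=; lia.
have SleA : #|S| <= alpha V F by rewrite /alpha; apply: leq_bigmax_cond; rewrite SV Si.
have ncpos : 0 < ncolors f by rewrite /ncolors card_gt0; apply/set0Pn; exists (f c); rewrite imset_f ?in_setT.
have XA : chibar E = alpha V F + 1 by lia.
have hT : (fun S : {set T} => (S \subset V) && [forall e in F, S :&: e != set0]) V.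
  rewrite /= subxx /=.
  apply/forallP => e'; apply/implyP => /imsetP[e he ->].
  have [y ye yc] := Fne e he; apply/set0Pn; exists y; by rewrite !inE ?inV yc ye.
have [S1 /andP[S1V S1t] tS1'] := (@bigmin_att _ (fun S : {set T} => (S \subset V) && [forall e in F, S :&: e != set0]) (fun S => #|S|) #|V| V hT erefl).
have tS1 : tau V F = #|S1| := tS1'.
clear hT tS1'.
have tle : tau V F <= #|V :\: S0|.
  rewrite /tau; apply: bigmin_le; rewrite subsetDl /=.
  apply/forallP => e'; apply/implyP => /imsetP[e he ->].
  have [x xe /andP[xc xS]] := S0i' e he; apply/set0Pn; exists x.
  by rewrite !inE ?inV xc xe xS.
have cVS0 : #|V :\: S0| = #|V| - #|S0| by rewrite cardsD (setIidPr S0V).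
have Age : #|V :\: S1| <= alpha V F.
  rewrite /alpha; apply: leq_bigmax_cond; rewrite subsetDl /=.
  apply/forallP => e'; apply/implyP => he'; have := forallP S1t e'; rewrite he' /=.
  move=> /set0Pn [y]; rewrite inE => /andP[yS ye]; apply/negP => /subsetP /(_ y ye).
  by rewrite in_setD yS.
have cVS1 : #|V :\: S1| = #|V| - #|S1| by rewrite cardsD (setIidPr S1V).
have S0le : #|S0| <= #|V| by apply: subset_leq_card.
have S1le : #|S1| <= #|V| by apply: subset_leq_card.
have tA : tau V F + alpha V F = #|V| by lia.
have cardT : 0 < #|T| by apply/card_gt0P; exists c.
split; first by rewrite /dec XA; lia.
split; last by [].
case: (set_0Vmem E) => [E0 | [e0 he0]].
  have t0 : tau V F <= #|@set0 T|.
    rewrite /tau; apply: bigmin_le; rewrite sub0set /=.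
    by apply/forallP => e'; apply/implyP => /imsetP[e]; rewrite E0 inE.
  have t20 : tau2 E <= #|@set0 T|.
    rewrite /tau2; apply: bigmin_le.
    by apply/forallP => e; rewrite E0 inE.
  by move: t0 t20; rewrite cards0 !leqn0 => /eqP -> /eqP ->.
have hT2 : (fun S : {set T} => [forall e in E, 1 < #|e :&: S|]) setT.
  by apply/forallP => e; apply/implyP => he; rewrite setIT; apply: Hh.
have [S2 S2t t2S2'] := (@bigmin_att _ (fun S : {set T} => [forall e in E, 1 < #|e :&: S|]) (fun S => #|S|) #|T| setT hT2 (cardsT T)).
have t2S2 : tau2 E = #|S2| := t2S2'.
clear hT2 t2S2'.
have claim : forall x e, e \in E -> exists2 y, y \in e :&: S2 & y != x.
  move=> x e he; have := cardsD1 x (e :&: S2); have := implyP (forallP S2t e) he => h1 h2.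
  have : 0 < #|(e :&: S2) :\ x| by move: h1 h2; clear; case: (x \in _) => /=; lia.
  rewrite card_gt0 => /set0Pn [y]; rewrite in_setD1 => /andP[yx yin]; by exists y.
have t2le : tau2 E <= tau V F + 1.
  rewrite tS1 /tau2.
  have cS1 : c \notin S1 by exact: (contra (subsetP S1V c) cV).
  have -> : #|S1| + 1 = #|c |: S1| by rewrite cardsU1 cS1 /=; clear; lia.
  apply: bigmin_le; apply/forallP => e; apply/implyP => he.
  have := implyP (forallP S1t (e :\ c)) (inF e he) => /set0Pn [y].
  rewrite !inE => /andP[yS /andP[yc ye]].
  have : [set c; y] \subset e :&: (c |: S1).
    by apply/subsetP => z; rewrite !inE => /orP[/eqP->|/eqP->]; rewrite ?eqxx ?(Hc e he) ?ye ?yS ?orbT.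
  move=> /subset_leq_card; by rewrite cards2 eq_sym yc.
have [y0 y0in _] := claim c e0 he0.
have S2pos : 0 < #|S2| by apply/card_gt0P; exists y0; move: y0in; rewrite inE => /andP[].
have tle2 : tau V F <= tau2 E - 1.
  rewrite t2S2 /tau; case cS2: (c \in S2).
  - have := cardsD1 c S2; rewrite cS2 /= => hc.
    have -> : #|S2| - 1 = #|S2 :\ c| by clear -hc; lia.
    apply: bigmin_le; apply/andP; split.
      by apply/subsetP => y; rewrite in_setD1 inV => /andP[].
    apply/forallP => e'; apply/implyP => /imsetP[e he ->].
    have [y yin yc] := claim c e he; apply/set0Pn; exists y.
    by move: yin; rewrite !inE yc => /andP[-> ->].
  - have [x xS] : exists x, x \in S2.
      by move: y0in; rewrite inE => /andP[_ h]; exists y0.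
    have := cardsD1 x S2; rewrite xS /= => hc.
    have -> : #|S2| - 1 = #|S2 :\ x| by clear -hc; lia.
    have yc : forall y, y \in S2 -> y != c by move=> y yS; apply: contraTneq yS => ->; rewrite cS2.
    apply: bigmin_le; apply/andP; split.
      by apply/subsetP => y; rewrite in_setD1 inV => /andP[_ /yc].
    apply/forallP => e'; apply/implyP => /imsetP[e he ->].
    have [y yin yx] := claim x e he; apply/set0Pn; exists y.
    move: yin; rewrite !inE yx => /andP[ye yS]; by rewrite ye yS (yc y yS).
clear -t2le tle2; lia.
Qed.
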